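(* Let $E,E_1,F,F_1$ be Banach spaces over $\mathbb{K}$, $m\in\mathbb{N}$, and let $R\in\mathcal{L}(E;F)$ and $B\in\mathcal{L}(E_1;F_1)$ be non-zero operators. Let $\mathcal{A}$ be an operator ideal and $(\mathcal{Q},\|\cdot\|_\mathcal{Q})$ a Banach polynomial ideal such that the bounded linear operator $S_{RB}\colon\mathcal{Q}(^mF_1;E)\to\mathcal{Q}(^mE_1;F)$, $S_{RB}(P)=R\circ P\circ B$, belongs to $\mathcal{A}$. Then: (a) $R\in\mathcal{A}(E;F)$; (b) if $(\mathcal{Q},\|\cdot\|_\mathcal{Q})$ contains the finite rank polynomials strongly, then $B\in\Delta^1_m\mathcal{A}(E_1;F_1)$, i.e. the operator $\Delta^1_mB\colon\mathcal{P}(^mF_1)\to\mathcal{P}(^mE_1)$, $q\mapsto q\circ B$, belongs to $\mathcal{A}(\mathcal{P}(^mF_1);\mathcal{P}(^mE_1))$.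
   Context: Banach spaces are over $\mathbb{K}=\mathbb{R}$ or $\mathbb{C}$; $\mathcal{P}(^jX;Y)$ is the Banach space of continuous $j$-homogeneous polynomials $X\to Y$ with sup norm, $\mathcal{P}(^jX)=\mathcal{P}(^jX;\mathbb{K})$, $\mathcal{L}(X;Y)$ the bounded linear operators. Operator ideals are in the sense of Pietsch. A polynomial of finite type is a finite linear combination of maps $x\mapsto\varphi(x)^jb$, $\varphi\in X^*$, $b\in Y$. A Banach polynomial ideal is a subclass $\mathcal{Q}$ of all continuous homogeneous polynomials between Banach spaces, with components $\mathcal{Q}(^jX;Y)=\mathcal{P}(^jX;Y)\cap\mathcal{Q}$ that are linear subspaces containing the finite-type polynomials, together with a function $\|\cdot\|_\mathcal{Q}$ that is a complete norm on each component, with $\|\lambda\in\mathbb{K}\mapsto\lambda^j\|_\mathcal{Q}=1$ for every $j$, and such that $t\circ P\circ u\in\mathcal{Q}(^jX;H)$ with $\|t\circ P\circ u\|_\mathcal{Q}\le\|t\|\,\|P\|_\mathcal{Q}\,\|u\|^j$ whenever $t\in\mathcal{L}(G;H)$, $P\in\mathcal{Q}(^jY;G)$, $u\in\mathcal{L}(X;Y)$. For $q\in\mathcal{P}(^jX)$ and $y\in Y$, $q\otimes y$ is the polynomial $x\mapsto q(x)y$. $(\mathcal{Q},\|\cdot\|_\mathcal{Q})$ contains the finite rank polynomials strongly if for each $j$ there is a constant $K_j$ such that for all Banach spaces $X,Y$, $q\in\mathcal{P}(^jX)$, $y\in Y$: $q\otimes y\in\mathcal{Q}(^jX;Y)$ and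 $\|q\otimes y\|_\mathcal{Q}\le K_j\|q\|\,\|y\|$. The spaces $\mathcal{Q}(^mF_1;E)$, $\mathcal{Q}(^mE_1;F)$ carry the norm $\|\cdot\|_\mathcal{Q}$. *)

(* Defs.v *)
From HB Require Import structures.
From mathcomp Require Import all_boot all_order all_algebra.
From mathcomp Require Import all_classical all_reals all_analysis.
From mathcomp Require Import complex.
Set Implicit Arguments. Unset Strict Implicit. Unset Printing Implicit Defensive.
Import Order.TTheory GRing.Theory Num.Theory.
Import numFieldNormedType.Exports.
Local Open Scope ring_scope.

Variant Kind := RealK | ComplexK.
Definition scalars (R : realType) (k : Kind) : numFieldType :=
  match k with RealK => (R : numFieldType) | ComplexK => (R[i] : numFieldType) end.

Section Defs.
Variable K : numFieldType.

Definition banach (X : normedModType K) : Prop :=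
  forall F : set_system X, ProperFilter F -> cauchy F -> cvg F.

Definition lin (X Y : normedModType K) (f : X -> Y) : Prop :=
  forall (a : K) (u v : X), f (a *: u + v) = a *: f u + f v.

Definition bounded_op (X Y : normedModType K) (f : X -> Y) : Prop :=
  lin f /\ continuous f.

Definition sup_ball_norm (X Y : normedModType K) (f : X -> Y) (c : K) : Prop :=
  (forall x : X, `|x| <= 1 -> `|f x| <= c) /\
  (forall e : K, 0 < e -> exists x : X, `|x| <= 1 /\ c - e < `|f x|).

Definition multilin (j : nat) (X Y : normedModType K) (A : ('I_j -> X) -> Y) : Prop :=
  forall (x : 'I_j -> X) (i : 'I_j) (a : K) (u v : X),
    A (fun k => if k == i then a *: u + v else x k) =
    a *: A (fun k => if k == i then u else x k) + A (fun k => if k == i then v else x k).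

Definition hpoly (j : nat) (X Y : normedModType K) (P : X -> Y) : Prop :=
  exists A : {ptws 'I_j -> X} -> Y,
    multilin (A : ('I_j -> X) -> Y) /\ continuous A /\ forall x : X, P x = A (fun _ => x).

(* Operator ideal (Pietsch).  [oi_mem X Y T] means T \in A(X;Y); the axioms
   are imposed for Banach spaces X, Y (values on non-complete spaces are
   irrelevant). *)
Record opideal := OpIdeal {
  oi_mem : forall X Y : normedModType K, (X -> Y) -> Prop;
  oi_sub : forall (X Y : normedModType K), banach X -> banach Y ->
    forall T : X -> Y, oi_mem T -> bounded_op T;
  oi_lin : forall (X Y : normedModType K), banach X -> banach Y ->
    forall (a : K) (S T : X -> Y), oi_mem S -> oi_mem T ->
      oi_mem (fun x => a *: S x + T x);
  oi_finrank : forall (X Y : normedModType K), banach X -> banach Y ->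
    forall (phi : X -> K^o) (y : Y), bounded_op phi ->
      oi_mem (fun x => (phi x : K) *: y);
  oi_ideal : forall (X0 X Y Y0 : normedModType K),
    banach X0 -> banach X -> banach Y -> banach Y0 ->
    forall (T : X0 -> X) (S : X -> Y) (U : Y -> Y0),
      bounded_op T -> oi_mem S -> bounded_op U -> oi_mem (U \o S \o T)
}.

(* The component Q(^jX;Y), with its norm
   ||.||_Q, is given as a normed space [pi_sp j X Y] together with an
   injective linear embedding [pi_emb] into the maps X -> Y; the component is
   the image of [pi_emb] and ||pi_emb p||_Q = `|p|. *)
Record polyideal := PolyIdeal {
  pi_sp : nat -> normedModType K -> normedModType K -> normedModType K;
  pi_emb : forall j (X Y : normedModType K), pi_sp j X Y -> X -> Y;
  pi_emb_lin : forall j (X Y : normedModType K) (a : K) (p q : pi_sp j X Y) (x : X),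
    pi_emb (a *: p + q) x = a *: pi_emb p x + pi_emb q x;
  pi_emb_inj : forall j (X Y : normedModType K), injective (@pi_emb j X Y);
  pi_banach : forall j (X Y : normedModType K), banach X -> banach Y ->
    banach (pi_sp j X Y);
  pi_poly : forall j (X Y : normedModType K), banach X -> banach Y ->
    forall p : pi_sp j X Y, hpoly j (pi_emb p);
  pi_fintype : forall j (X Y : normedModType K), banach X -> banach Y ->
    forall s : seq ((X -> K^o) * Y), (forall q, q \in s -> bounded_op q.1) ->
      exists p : pi_sp j X Y,
        pi_emb p = (fun x => \sum_(q <- s) ((q.1 x : K) ^+ j) *: q.2);
  pi_norm1 : forall j (p : pi_sp j K^o K^o),
    pi_emb p = (fun l : K^o => ((l : K) ^+ j : K^o)) -> `|p| = 1;
  pi_ideal : forall j (X Y G H : normedModType K),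
    banach X -> banach Y -> banach G -> banach H ->
    forall (t : G -> H) (P : pi_sp j Y G) (u : X -> Y),
      bounded_op t -> bounded_op u ->
      exists p : pi_sp j X H, pi_emb p = t \o pi_emb P \o u /\
        forall ct cu, sup_ball_norm t ct -> sup_ball_norm u cu ->
          `|p| <= ct * `|P| * cu ^+ j
}.

Definition strongly_finrank (Q : polyideal) : Prop :=
  forall j : nat, exists Kj : K,
    forall (X Y : normedModType K), banach X -> banach Y ->
    forall (q : X -> K^o) (y : Y), hpoly j q ->
      exists p : pi_sp Q j X Y, pi_emb p = (fun x => (q x : K) *: y) /\
        forall cq, sup_ball_norm q cq -> `|p| <= Kj * cq * `|y|.

(* G (via phi) is a model of the Banach space P(^jX) of continuous
   j-homogeneous scalar polynomials with the sup norm: phi is a linear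
   isometric bijection from G onto P(^jX). *)
Record polyspace_model (j : nat) (X G : normedModType K) (phi : G -> X -> K^o) : Prop := {
  pm_lin : forall (a : K) (g h : G) (x : X), phi (a *: g + h) x = a *: phi g x + phi h x;
  pm_inj : injective phi;
  pm_onto : forall P : X -> K^o, hpoly j P <-> exists g : G, phi g = P;
  pm_norm : forall g : G, sup_ball_norm (phi g) `|g|
}.

End Defs.

(* Main.v *)
Require Import Defs.
From HB Require Import structures.
From mathcomp Require Import all_boot all_order all_algebra.
From mathcomp Require Import all_classical all_reals all_analysis.
From mathcomp Require Import complex.
From mathcomp Require Import ring lra.
Import Order.TTheory GRing.Theory Num.Theory.
Import numFieldNormedType.Exports.
Local Open Scope ring_scope.
Local Open Scope classical_set_scope.
Set Implicit Arguments. Unset Strict Implicit. Unset Printing Implicit Defensive.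

Section RealHB.
Variables (R : realType) (K : numFieldType) (V : lmodType K) (iota : R -> K).
Hypothesis iotaD : forall a b, iota (a + b) = iota a + iota b.
Hypothesis iotaM : forall a b, iota (a * b) = iota a * iota b.
Hypothesis iota1 : iota 1 = 1.
Variable p : V -> R.
Hypothesis pZ : forall a u, p (iota a *: u) = `|a| * p u.
Hypothesis pD : forall u v, p (u + v) <= p u + p v.

Let sc a (u : V) := iota a *: u.

Lemma iota0 : iota 0 = 0.
Proof. have := iotaD 0 0; rewrite addr0 => h; apply: (addrI (iota 0)); by rewrite -h addr0. Qed.

Lemma iotaN a : iota (- a) = - iota a.
Proof. by apply/eqP; rewrite -subr_eq0 opprK -iotaD addNr iota0. Qed.

Lemma scD a b u : sc (a + b) u = sc a u + sc b u.
Proof. by rewrite /sc iotaD scalerDl. Qed.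
Lemma scM a b u : sc (a * b) u = sc a (sc b u).
Proof. by rewrite /sc iotaM scalerA. Qed.
Lemma sc1 u : sc 1 u = u.
Proof. by rewrite /sc iota1 scale1r. Qed.
Lemma sc0 u : sc 0 u = 0.
Proof. by rewrite /sc iota0 scale0r. Qed.
Lemma scr a u v : sc a (u + v) = sc a u + sc a v.
Proof. by rewrite /sc scalerDr. Qed.
Lemma scN a u : sc (- a) u = - sc a u.
Proof. by rewrite /sc iotaN scaleNr. Qed.
Lemma scr0 a : sc a 0 = 0.
Proof. by rewrite /sc scaler0. Qed.

Lemma p0 : p 0 = 0.
Proof. by have := pZ 0 0; rewrite normr0 mul0r -/(sc 0 0) sc0. Qed.
Lemma pN u : p (- u) = p u.
Proof. by have := pZ (-1) u; rewrite -/(sc _ _) scN sc1 normrN normr1 mul1r. Qed.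
Lemma p_ge0 u : 0 <= p u.
Proof. have := pD u (- u); rewrite subrr p0 pN => h; lra. Qed.
Lemma pZp a u : 0 <= a -> p (sc a u) = a * p u.
Proof. by move=> a0; rewrite /sc pZ ger0_norm. Qed.

Definition subsp (D : set V) := D 0 /\ forall a u v, D u -> D v -> D (sc a u + v).
Definition linon (D : set V) (f : V -> R) :=
  forall a u v, D u -> D v -> f (sc a u + v) = a * f u + f v.
Definition domp (D : set V) (f : V -> R) := forall u, D u -> f u <= p u.

Lemma linon0 D f : subsp D -> linon D f -> f 0 = 0.
Proof.
move=> [D0 _] lf; have := lf 1 0 0 D0 D0; rewrite sc1 addr0 mul1r => h.
by apply: (addrI (f 0)); rewrite -h addr0.
Qed.

Lemma linonZ D f a u : subsp D -> linon D f -> D u -> f (sc a u) = a * f u.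
Proof.
move=> sD lf Du; have := lf a u 0 Du sD.1.
by rewrite addr0 (linon0 sD lf) addr0.
Qed.

Lemma subspZ D a u : subsp D -> D u -> D (sc a u).
Proof. by move=> [D0 h] Du; have := h a u 0 Du D0; rewrite addr0. Qed.
Lemma subspD D u v : subsp D -> D u -> D v -> D (u + v).
Proof. by move=> [D0 h] Du Dv; have := h 1 u v Du Dv; rewrite sc1. Qed.
Lemma subspN D u : subsp D -> D u -> D (- u).
Proof. by move=> sD Du; have := subspZ (-1) sD Du; rewrite scN sc1. Qed.

Definition extD (D : set V) (z : V) := [set v | exists x t, D x /\ v = x + sc t z].

Lemma ext_uniq D z x t x' t' : subsp D -> ~ D z -> D x -> D x' ->
  x + sc t z = x' + sc t' z -> x = x' /\ t = t'.
Proof.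
move=> sD nz Dx Dx' e.
have et : t = t'.
  apply/eqP; apply/negPn/negP => ne; apply: nz.
  have : sc (t - t') z = x' - x.
    by rewrite scD scN; apply/eqP; rewrite subr_eq addrAC -e addrC addrA addNr add0r.
  move=> h; have : D (sc ((t - t')^-1) (sc (t - t') z)).
    by rewrite h; apply: subspZ => //; apply: subspD => //; apply: subspN.
  by rewrite -scM mulVf ?sc1 // subr_eq0.
by split=> //; move: e; rewrite et => /addIr.
Qed.

Lemma ext1 D f z c : subsp D -> linon D f -> domp D f -> ~ D z ->
  (forall x, D x -> f x + c <= p (x + z) /\ f x - c <= p (x - z)) ->
  exists g, [/\ subsp (extD D z), linon (extD D z) g, domp (extD D z) g &
    forall x t, D x -> g (x + sc t z) = f x + t * c].
Proof.
move=> sD lf df nz hc.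
pose P v (xt : V * R) := D xt.1 /\ v = xt.1 + sc xt.2 z.
pose g v := if pselect (exists xt, P v xt) is left h then
   let xt := projT1 (cid h) in f xt.1 + xt.2 * c else 0.
have gE x t : D x -> g (x + sc t z) = f x + t * c.
  move=> Dx; rewrite /g; case: pselect => [h|[]]; last by exists (x, t).
  case: (cid h) => [[x' t'] [/= Dx' e]] /=.
  by have [-> ->] := ext_uniq sD nz Dx Dx' e.
exists g; split => //.
- split; first by exists 0, 0; split; [exact: sD.1| rewrite sc0 addr0].
  move=> a u v [x [t [Dx ->]]] [x' [t' [Dx' ->]]].
  exists (sc a x + x'), (a * t + t'); split; first by apply: sD.2.
  by rewrite scD scM scr; rewrite addrACA.
- move=> a u v [x [t [Dx ->]]] [x' [t' [Dx' ->]]].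
  have -> : sc a (x + sc t z) + (x' + sc t' z) = (sc a x + x') + sc (a * t + t') z.
    by rewrite scD scM scr; rewrite addrACA.
  rewrite !gE //; last by apply: sD.2.
  rewrite lf //; ring.
- move=> u [x [t [Dx ->]]]; rewrite gE //.
  have [t0|t0|<-] := ltgtP 0 t; last by rewrite mul0r addr0 sc0 addr0; apply: df.
  + have := (hc _ (subspZ (t^-1) sD Dx)).1.
    rewrite (linonZ _ sD lf Dx) => h.
    have -> : x + sc t z = sc t (sc t^-1 x + z).
      by rewrite scr -scM mulfV ?gt_eqF // sc1.
    rewrite pZp; last exact: ltW t0.
    have := ler_wpM2l (ltW t0) h; rewrite mulrDr mulrA mulfV ?gt_eqF // mul1r.
    by rewrite mulrC.
  + have tn : 0 < - t by rewrite oppr_gt0.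
    have := (hc _ (subspZ ((- t)^-1) sD Dx)).2.
    rewrite (linonZ _ sD lf Dx) => h.
    have -> : x + sc t z = sc (- t) (sc (- t)^-1 x - z).
      rewrite scr -scM mulfV ?gt_eqF // sc1.
      by rewrite /sc iotaN scaleNr scalerN opprK.
    rewrite pZp; last exact: ltW tn.
    have := ler_wpM2l (ltW tn) h; rewrite mulrDr mulrA mulfV ?gt_eqF // mul1r.
    by rewrite mulrN mulNr opprK mulrC.
Qed.

Lemma ext_c D f z : subsp D -> linon D f -> domp D f ->
  exists c, forall x, D x -> f x + c <= p (x + z) /\ f x - c <= p (x - z).
Proof.
move=> sD lf df.
pose S := [set r | exists x, D x /\ r = f x - p (x - z)].
have S0 : S !=set0 by exists (f 0 - p (0 - z)); exists 0; split => //; exact: sD.1.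
have ubS y : D y -> ubound S (p (y + z) - f y).
  move=> Dy _ [x [Dx ->]].
  have h1 : f (x + y) <= p (x + y) by apply: df; apply: subspD.
  have h2 : p (x + y) <= p (x - z) + p (y + z).
    have -> : x + y = (x - z) + (y + z) by rewrite addrACA addNr addr0.
    exact: pD.
  have : f (x + y) = f x + f y by rewrite -[x]sc1 lf ?sc1 ?mul1r.
  lra.
have hub : has_ubound S by exists (p (0 + z) - f 0); apply: ubS; exact: sD.1.
exists (sup S) => x Dx; split.
- have := ge_sup S0 (ubS x Dx); lra.
- have : S (f x - p (x - z)) by exists x.
  move=> /(ub_le_sup hub); lra.
Qed.

Definition goodfp (y : V) (fp : set V * (V -> R)) :=
  [/\ subsp fp.1, linon fp.1 fp.2, domp fp.1 fp.2, fp.1 y & fp.2 y = p y].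

Lemma real_hb (y : V) : exists f : V -> R,
  [/\ forall a u v, f (sc a u + v) = a * f u + f v,
      forall u, f u <= p u & f y = p y].
Proof.
have [->|y0] := eqVneq y 0.
  exists (fun _ => 0); split => //; first by move=> *; rewrite mulr0 addr0.
  - by move=> u; apply: p_ge0.
  - by rewrite p0.
pose D0 : set V := [set v | v = 0].
have sD0 : subsp D0.
  by split => // a u v -> ->; rewrite scr0 addr0.
have lD0 : linon D0 (fun _ => 0) by move=> *; rewrite mulr0 addr0.
have dD0 : domp D0 (fun _ => 0) by move=> u _; apply: p_ge0.
have nDy : ~ D0 y by move=> /eqP; rewrite (negbTE y0).
have hc0 : forall x, D0 x -> 0 + p y <= p (x + y) /\ 0 - p y <= p (x - y).
  move=> x ->; rewrite !add0r pN; split => //; have := p_ge0 y; lra.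
have [g0 [sg0 lg0 dg0 g0E]] := ext1 sD0 lD0 dD0 nDy hc0.
have Dy1 : extD D0 y y by exists 0, 1; split => //; rewrite sc1 add0r.
have g0y : g0 y = p y.
  by have := g0E 0 1 erefl; rewrite sc1 add0r mul1r add0r.
pose T := {fp : set V * (V -> R) | goodfp y fp}.
have good0 : goodfp y (extD D0 y, g0) by split.
pose t0 : T := exist _ _ good0.
pose le (s t : T) := `[< (sval s).1 `<=` (sval t).1 /\
     forall u, (sval s).1 u -> (sval t).2 u = (sval s).2 u >].
have [|||t tmax] := @ZL_preorder T t0 le.
- by move=> s; apply/asboolP; split.
- move=> r s t /asboolP [rs1 rs2] /asboolP [st1 st2]; apply/asboolP; split.
    by move=> u /rs1 /st1.
  by move=> u ru; rewrite st2 ?rs2 //; apply: rs1.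
- move=> A tot.
  have [[s0 As0]|nA] := pselect (exists s, A s); last first.
    by exists t0 => s As; case: nA; exists s.
  pose D : set V := fun v => exists s, A s /\ (sval s).1 v.
  pose f v := if pselect (exists s, A s /\ (sval s).1 v) is left h then
      (sval (projT1 (cid h))).2 v else 0.
  have fE s v : A s -> (sval s).1 v -> f v = (sval s).2 v.
    move=> As sv; rewrite /f; case: pselect => [h|[]]; last by exists s.
    case: (cid h) => s' [As' s'v] /=.
    have [/asboolP [h1 h2]|/asboolP [h1 h2]] := tot _ _ As As'.
    + by rewrite h2.
    + by rewrite h2.
  have two s1 s2 u v : A s1 -> A s2 -> (sval s1).1 u -> (sval s2).1 v ->
      exists s, [/\ A s, (sval s).1 u & (sval s).1 v].
    move=> A1 A2 u1 v2; have [/asboolP [h1 _]|/asboolP [h1 _]] := tot _ _ A1 A2.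
    + by exists s2; split => //; apply: h1.
    + by exists s1; split => //; apply: h1.
  have gD : goodfp y (D, f).
    split => /=.
    - split; first by exists s0; split => //; case: (svalP s0) => [[]].
      move=> a u v [s1 [A1 u1]] [s2 [A2 v2]].
      have [s [As su sv]] := two _ _ _ _ A1 A2 u1 v2.
      exists s; split => //; case: (svalP s) => [[_ +] _ _ _ _]; apply => //.
    - move=> a u v [s1 [A1 u1]] [s2 [A2 v2]].
      have [s [As su sv]] := two _ _ _ _ A1 A2 u1 v2.
      case: (svalP s) => [[_ sD2] ls _ _ _].
      by rewrite (fE s) ?(fE s u) ?(fE s v) //; [apply: ls | apply: sD2].
    - move=> u [s [As su]]; rewrite (fE s) //.
      by case: (svalP s) => [_ _ ds _ _]; apply: ds.
    - by exists s0; split => //; case: (svalP s0).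
    - by rewrite (fE s0) //; case: (svalP s0).
  exists (exist _ _ gD) => s As; apply/asboolP; split => /=.
    by move=> u su; exists s.
  by move=> u su; apply: fE.
-
  case: t tmax => [[D f] [sD lf df Dy fy]] tmax.
  have DT : forall z, D z.
    move=> z; apply: contrapT => nz.
    have [c hc] := ext_c z sD lf df.
    have [g [sg lg dg gE]] := ext1 sD lf df nz hc.
    have DD' : D `<=` extD D z by move=> u Du; exists u, 0; rewrite sc0 addr0.
    have gagree u : D u -> g u = f u.
      by move=> Du; have := gE u 0 Du; rewrite sc0 !addr0 mul0r addr0.
    have g' : goodfp y (extD D z, g).
      by split => //=; [apply: DD' | rewrite gagree].
    have := tmax (exist _ _ g') (asboolT (conj DD' gagree)).
    move=> /asboolP [/= h _]; apply: nz; apply: h.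
    by exists 0, 1; split; [exact: sD.1 | rewrite sc1 add0r].
  exists f; split => //.
  + by move=> a u v; apply: (lf).
  + by move=> u; apply: (df).
Qed.

End RealHB.
Lemma hb_realK (R : realType) (V : normedModType (scalars R RealK)) (y : V) :
  exists phi : V -> (scalars R RealK)^o,
    lin phi /\ (forall z, `|phi z| <= `|z|) /\ phi y = `|y|.
Proof.
pose iota := (fun r : R => (r : scalars R RealK)).
have h1 : forall a b, iota (a + b) = iota a + iota b by [].
have h2 : forall a b, iota (a * b) = iota a * iota b by [].
have h3 : iota 1 = 1 by [].
have h4 : forall a (u : V), `|iota a *: u| = `|a| * `|u| by move=> a u; rewrite normrZ.
have h5 : forall u v : V, `|u + v| <= `|u| + `|v| by move=> u v; apply: ler_normD.
have [f [fl fp fy]] := @real_hb R (scalars R RealK) V iota h1 h2 h3 (fun u => `|u|) h4 h5 y.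
exists f; split; first by move=> a u v; apply: fl.
split => // z; rewrite ler_norml fp andbT.
have := fl (-1) z 0; rewrite addr0 => h.
have : f (iota (-1) *: z) = - f z.
  rewrite h; have := fl 1 0 0; rewrite !addr0 scaler0 => h0.
  have f0 : f 0 = 0.
    by move: h0; rewrite mul1r; lra.
  by rewrite f0 addr0 mulN1r.
rewrite /iota scaleN1r => e.
by rewrite lerNl -e; apply: le_trans (fp _) _; rewrite normrN.
Qed.

Section ComplexPart.
Local Open Scope complex_scope.
Section T.
Variable R : realType.
Lemma t1 (ar ai A B C D : R) :
 (ar * A + ai * B + C)%:C - 'i * (ar * B - ai * A + D)%:C = (ar +i* ai) * (A%:C - 'i * B%:C) + (C%:C - 'i * D%:C).
Proof. apply/eqP; rewrite eq_complex /=; simpc; rewrite ?andTb; apply/eqP; ring. Qed.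
Lemma t2 (r : R) : `|r%:C| = `|r|%:C.
Proof. by rewrite normc_def /= expr0n addr0 sqrtr_sqr. Qed.
Lemma t3 (r : R) (w : R[i]) : complex.Re (r%:C * w) = r * complex.Re w.
Proof. by case: w => a b /=; simpc. Qed.
Lemma t4 (w z : R[i]) : complex.Re (w + z) = complex.Re w + complex.Re z.
Proof. by case: w; case: z. Qed.

End T.

Lemma hb_complexK (R : realType) (V : normedModType (scalars R ComplexK)) (y : V) :
  exists phi : V -> (scalars R ComplexK)^o,
    lin phi /\ (forall z, `|phi z| <= `|z|) /\ phi y = `|y|.
Proof.
pose iota := (fun r : R => (r%:C : scalars R ComplexK)).
have h1 : forall a b, iota (a + b) = iota a + iota b by move=> a b; rewrite /iota rmorphD.
have h2 : forall a b, iota (a * b) = iota a * iota b by move=> a b; rewrite /iota rmorphM.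
have h3 : iota 1 = 1 by rewrite /iota rmorph1.
pose p := fun u : V => complex.Re `|u|.
have h4 : forall a (u : V), p (iota a *: u) = `|a| * p u.
  by move=> a u; rewrite /p normrZ /iota t2 t3.
have h5 : forall u v : V, p (u + v) <= p u + p v.
  move=> u v; rewrite /p -t4; have := ler_normD u v.
  by rewrite lecE => /andP [].
have [f [fl fp fy]] := @real_hb R (scalars R ComplexK) V iota h1 h2 h3 p h4 h5 y.
have f0 : f 0 = 0.
  by have := fl 1 0 0; rewrite !addr0 scaler0 mul1r => h; apply: (addrI (f 0)); rewrite -h addr0.
have fD u v : f (u + v) = f u + f v by have := fl 1 u v; rewrite h3 scale1r mul1r.
have fZ r u : f (iota r *: u) = r * f u by have := fl r u 0; rewrite !addr0 f0 addr0.
have fii u : f ('i%C *: ('i%C *: u)) = - f u.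
  rewrite scalerA.
  have -> : ('i%C * 'i%C : scalars R ComplexK) = iota (-1).
    by apply/eqP; rewrite eq_complex /=; simpc.
  by rewrite fZ mulN1r.
pose phi := fun u : V => ((f u)%:C - 'i%C * (f ('i%C *: u))%:C : (scalars R ComplexK)^o).
have phi_lin : lin phi.
  move=> [ar ai] u v.
  have ea : (ar +i* ai : scalars R ComplexK) *: u = iota ar *: u + iota ai *: ('i%C *: u).
    rewrite scalerA -scalerDl; congr (_ *: _).
    by apply/eqP; rewrite eq_complex /=; simpc.
  have comm r w : 'i%C *: (iota r *: w) = iota r *: ('i%C *: w).
    by rewrite !scalerA mulrC.
  have fa : f ((ar +i* ai : scalars R ComplexK) *: u + v) = ar * f u + ai * f ('i%C *: u) + f v.
    by rewrite ea !fD !fZ.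
  have fb : f ('i%C *: ((ar +i* ai : scalars R ComplexK) *: u + v)) =
      ar * f ('i%C *: u) - ai * f u + f ('i%C *: v).
    by rewrite ea !scalerDr !comm !fD !fZ fii mulrN.
  have := t1 ar ai (f u) (f ('i%C *: u)) (f v) (f ('i%C *: v)).
  rewrite -fa -fb => e; exact: e.
have phi0 : phi 0 = 0.
  by rewrite /phi scaler0 f0; apply/eqP; rewrite eq_complex /=; simpc.
have phiZ a u : phi (a *: u) = a * phi u.
  by have := phi_lin a u 0; rewrite addr0 phi0 addr0.
have Rephi u : complex.Re (phi u) = f u by rewrite /phi /=; simpc.
have phin z : `|phi z| <= `|z|.
  have [w0|wn0] := eqVneq (phi z) 0; first by rewrite w0 normr0.
  set w := phi z in wn0 *.
  have nw0 : `|w| != 0 by rewrite normr_eq0.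
  pose om := (w^*%R / `|w| : scalars R ComplexK).
  have e1 : phi (om *: z) = `|w|.
    rewrite phiZ -/w /om mulrAC -normCKC expr2 mulfK //.
  have e2 : `|om| = 1.
    by rewrite /om normrM normfV norm_conjC normr_id mulfV.
  have := fp (om *: z); rewrite -Rephi e1 /p normrZ e2 mul1r => h.
  rewrite lecE h andbT.
  by rewrite !ger0_Im ?normr_ge0.
exists phi; split => //; split => //.
have hy := phin y.
have : `|phi y| ^+ 2 <= `|y| ^+ 2 by rewrite lerXn2r ?nnegrE ?normr_ge0.
have en : `|y| = (complex.Re `|y|)%:C.
  by rewrite [LHS]complexE (ger0_Im (normr_ge0 y)) mulr0 addr0.
rewrite -!add_Re2_Im2 [in X in _ <= X]en -rmorphXn lecR Rephi fy.
have -> : complex.Im (phi y) = - f ('i%C *: y) by rewrite /phi /=; simpc.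
rewrite /p => hb.
have b0 : f ('i%C *: y) = 0.
  apply/eqP; rewrite -sqrf_eq0 eq_le sqr_ge0 andbT.
  by move: hb; rewrite sqrrN; lra.
rewrite /phi b0 fy /p en.
by apply/eqP; rewrite eq_complex /=; simpc.
Qed.
Lemma banach_realK (R : realType) : banach (scalars R RealK)^o.
Proof. move=> F PF; exact: cauchy_cvg. Qed.

Lemma nRe_le (R : realType) (x : R[i]) : `|complex.Re x| <= complex.Re `|x|.
Proof.
have := normc_ge_Re x; rewrite lecE => /andP [_].
by rewrite /=; simpc.
Qed.

Lemma nIm_le (R : realType) (x : R[i]) : `|complex.Im x| <= complex.Re `|x|.
Proof.
have := nRe_le (x * 'i%C); rewrite ReiNIm normrN normrM.
have -> : `|'i%C : R[i]| = 1 by apply: normCi.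
by rewrite mulr1.
Qed.

Lemma normc_RI (R : realType) (x : R[i]) :
  complex.Re `|x| <= `|complex.Re x| + `|complex.Im x|.
Proof.
rewrite [x in `|x|]complexE.
have := ler_normD (complex.Re x)%:C ('i%C * (complex.Im x)%:C).
rewrite normrM normCi mul1r !t2 lecE => /andP [_].
rewrite /=; simpc. by [].
Qed.

Lemma banach_complexK (R : realType) : banach (scalars R ComplexK)^o.
Proof.
move=> F PF /cauchyP Fc.
pose re := (fun z : (scalars R ComplexK)^o => complex.Re z).
pose im := (fun z : (scalars R ComplexK)^o => complex.Im z).
have cRe : cauchy (re @ F).
  apply: cauchy_exP => e e0.
  have e0c : 0 < (e%:C : scalars R ComplexK) by rewrite ltcR.
  have [x Fx] := Fc _ e0c.
  exists (complex.Re x); rewrite /= /fmap /=.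
  apply: filterS Fx => t; rewrite -!ball_normE /= => h.
  have -> : complex.Re x - re t = complex.Re (x - t) by rewrite /re; case: (x) => ? ?; case: (t).
  apply: le_lt_trans (nRe_le _) _.
  by move: h; rewrite ltcE => /andP [_].
have cIm : cauchy (im @ F).
  apply: cauchy_exP => e e0.
  have e0c : 0 < (e%:C : scalars R ComplexK) by rewrite ltcR.
  have [x Fx] := Fc _ e0c.
  exists (complex.Im x); rewrite /= /fmap /=.
  apply: filterS Fx => t; rewrite -!ball_normE /= => h.
  have -> : complex.Im x - im t = complex.Im (x - t) by rewrite /im; case: (x) => ? ?; case: (t).
  apply: le_lt_trans (nIm_le _) _.
  by move: h; rewrite ltcE => /andP [_].
have [a Fa] := (cvg_ex _).1 (cauchy_cvg _ cRe).
have [b Fb] := (cvg_ex _).1 (cauchy_cvg _ cIm).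
apply/cvg_ex; exists (a +i* b : scalars R ComplexK).
apply/cvgrPdist_lt => e e0.
have [Ie0 Re0] : complex.Im e = 0 /\ 0 < complex.Re e.
  by move: e0; rewrite ltcE => /andP [/eqP h1 h2]; split.
have e0' : 0 < complex.Re e / 2 by apply: divr_gt0.
have ha := (cvgrPdist_lt _ _).1 Fa _ e0'.
have hb := (cvgrPdist_lt _ _).1 Fb _ e0'.
apply: filterS2 (ha _) (hb _) => t h1 h2.
rewrite ltcE Ie0 ger0_Im ?normr_ge0 // eqxx /=.
apply: le_lt_trans (normc_RI _) _.
have -> : complex.Re (a +i* b - t) = a - re t by rewrite /re; case: (t).
have -> : complex.Im (a +i* b - t) = b - im t by rewrite /im; case: (t).
move: h1 h2; rewrite /=; lra.
Qed.

Lemma normed_hb (R : realType) (k : Kind) (V : normedModType (scalars R k)) (y : V) :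
  exists phi : V -> (scalars R k)^o,
    lin phi /\ (forall z, `|phi z| <= `|z|) /\ phi y = `|y|.
Proof. by case: k V y => V y; [exact: hb_realK | exact: hb_complexK]. Qed.

Lemma banachK (R : realType) (k : Kind) : banach (scalars R k)^o.
Proof. by case: k; [exact: banach_realK | exact: banach_complexK]. Qed.

End ComplexPart.

Section Gen.
Variable K : numFieldType.

Lemma lin0 (X Y : normedModType K) (f : X -> Y) : lin f -> f 0 = 0.
Proof.
move=> fl; have := fl 1 0 0; rewrite scale1r addr0 scale1r => h.
by apply: (addrI (f 0)); rewrite -h addr0.
Qed.

Lemma linD (X Y : normedModType K) (f : X -> Y) u v : lin f -> f (u + v) = f u + f v.
Proof. by move=> fl; have := fl 1 u v; rewrite !scale1r. Qed.

Lemma linZ (X Y : normedModType K) (f : X -> Y) a u : lin f -> f (a *: u) = a *: f u.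
Proof. by move=> fl; have := fl a u 0; rewrite !addr0 lin0 // addr0. Qed.

Lemma linB (X Y : normedModType K) (f : X -> Y) u v : lin f -> f (u - v) = f u - f v.
Proof.
move=> fl; rewrite linD // -scaleN1r linZ // scaleN1r //.
Qed.

Lemma lip_cont (X Y : normedModType K) (f : X -> Y) (C : K) :
  0 <= C -> lin f -> (forall x, `|f x| <= C * `|x|) -> bounded_op f.
Proof.
move=> Cge0 fl fC; split => // x.
have C0 : 0 < C + 1 by rewrite ltr_wpDl.
have fC' z : `|f z| <= (C + 1) * `|z|.
  by apply: le_trans (fC z) _; apply: ler_wpM2r => //; rewrite lerDl.
apply/cvgrPdist_lt => e e0.
have := @near_ball _ _ x (e / (C + 1)) (divr_gt0 e0 C0).
apply: filterS => t; rewrite -ball_normE /= => h.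
rewrite -linB //; apply: le_lt_trans (fC' _) _.
by rewrite -ltr_pdivlMl // mulrC.
Qed.

Lemma hpolyZ j (X Y : normedModType K) (P : X -> Y) a x :
  hpoly j P -> P (a *: x) = a ^+ j *: P x.
Proof.
move=> [A [mA [_ PA]]]; rewrite !PA.
suff H : forall n, (n <= j)%N ->
    A (fun k : 'I_j => if (k < n)%N then a *: x else x) = a ^+ n *: A (fun _ => x).
  have := H j (leqnn j).
  have -> : (fun k : 'I_j => if (k < j)%N then a *: x else x) = (fun _ => a *: x).
    by apply: funext => k; rewrite ltn_ord.
  done.
elim=> [|n IH] hn.
  have -> : (fun k : 'I_j => if (k < 0)%N then a *: x else x) = (fun _ => x) by [].
  by rewrite expr0 scale1r.
pose i : 'I_j := Ordinal hn.
have A0 : forall g, A (fun k => if k == i then 0 else g k) = 0.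
  move=> g; have := mA g i 1 0 0; rewrite scale1r addr0 scale1r => h.
  by apply: (addrI (A (fun k => if k == i then 0 else g k))); rewrite -h addr0.
have := mA (fun k : 'I_j => if (k < n)%N then a *: x else x) i a x 0.
rewrite A0 addr0.
have -> : (fun k : 'I_j => if k == i then a *: x else if (k < n)%N then a *: x else x)
   = (fun k : 'I_j => if (k < n.+1)%N then a *: x else x).
  apply: funext => k; case: (eqVneq k i) => [->|ne] /=; first by rewrite ltnSn.
  rewrite [in RHS]ltnS [in RHS]leq_eqVlt; suff -> : (k == n :> nat) = false by [].
  by apply/negbTE; move: ne; apply: contra => /eqP e; apply/eqP/val_inj.
have -> : (fun k : 'I_j => if k == i then x else if (k < n)%N then a *: x else x)
   = (fun k : 'I_j => if (k < n)%N then a *: x else x).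
  by apply: funext => k; case: (eqVneq k i) => [->|ne] //=; rewrite ltnn.
by rewrite addr0 => ->; rewrite IH ?(ltnW hn) // scalerA exprS.
Qed.

Lemma sup_le (X Y : normedModType K) (f : X -> Y) c d :
  sup_ball_norm f c -> (forall x, `|x| <= 1 -> `|f x| <= d) -> c <= d.
Proof.
move=> [h1 h2] hd.
have [x [x1 hx]] := h2 1 ltr01.
have cr : c \is Num.real.
  have : c - 1 \is Num.real by rewrite (ler_real (ltW hx)) realE normr_ge0.
  by move=> h; rewrite -(subrK 1 c); apply: rpredD => //; apply: rpred1.
have dr : d \is Num.real by apply: ger0_real; apply: le_trans (hd x x1).
rewrite real_leNgt //; apply/negP => dc.
have cd0 : 0 < c - d by rewrite subr_gt0.
have [y [y1 hy]] := h2 (c - d) cd0.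
have hyd := hd y y1; move: hy; rewrite opprB addrC subrK => hy.
by have := lt_le_trans hy hyd; rewrite ltxx.
Qed.

Lemma sup_scal (X : normedModType K) (x : X) : sup_ball_norm (fun l : K^o => l *: x) `|x|.
Proof.
split.
  move=> l l1; rewrite normrZ.
  by have := ler_wpM2r (normr_ge0 x) l1; rewrite mul1r.
move=> e e0; exists 1; split; first by rewrite normr1.
by rewrite scale1r ltrBlDr ltrDl.
Qed.

Lemma sup_id1 : sup_ball_norm (fun l : K^o => l) 1.
Proof.
have := sup_scal (1 : K^o); rewrite normr1.
have -> : (fun l : K^o => l *: (1 : K^o)) = (fun l => l).
  by apply: funext => l; rewrite /GRing.scale /= mulr1.
done.
Qed.

Lemma sup_phi (X : normedModType K) (phi : X -> K^o) y :
  lin phi -> (forall z, `|phi z| <= `|z|) -> phi y = `|y| -> y != 0 ->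
  sup_ball_norm phi 1.
Proof.
move=> pl pn py y0; split.
  by move=> x x1; apply: le_trans (pn x) x1.
move=> e e0; exists (`|y|^-1 *: y); split.
  by rewrite normrZ normfV normr_id mulVf ?normr_eq0.
rewrite linZ // py /GRing.scale /= mulVf ?normr_eq0 // normr1.
by rewrite ltrBlDr ltrDl.
Qed.

Lemma le_normb (a b c : K) : 0 <= a -> a <= b * c -> 0 <= c -> a <= `|b| * c.
Proof.
move=> a0 h c0.
have r : b * c \is Num.real by apply: ger0_real; apply: le_trans a0 h.
apply: le_trans h _.
by apply: le_trans (real_ler_norm r) _; rewrite normrM (ger0_norm c0).
Qed.

Lemma expn_le1 (x : K) n : 0 <= x -> x <= 1 -> x ^+ n <= 1.
Proof. by move=> x0 x1; apply: exprn_ile1. Qed.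

End Gen.
Lemma banach_transfer (K : numFieldType) (X Y : normedModType K) (Psi : X -> Y) (c C : K) :
  banach Y -> 0 < c -> 0 < C ->
  (forall x x', c * `|x - x'| <= `|Psi x - Psi x'|) ->
  (forall x x', `|Psi x - Psi x'| <= C * `|x - x'|) ->
  (forall y, exists x, Psi x = y) -> banach X.
Proof.
move=> hY c0 C0 lo hi su F PF /cauchyP Fc.
have : cauchy (Psi @ F).
  apply: cauchy_exP => e e0.
  have [x Fx] := Fc (e / C) (divr_gt0 e0 C0).
  exists (Psi x); rewrite /= /fmap /=.
  apply: filterS Fx => t; rewrite -!ball_normE /= => h.
  apply: (le_lt_trans (hi _ _)).
  by rewrite -ltr_pdivlMl // mulrC.
move=> /(hY _ _) /cvg_ex [y Fy].
have [x0 hx0] := su y.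
apply/cvg_ex; exists x0.
apply/cvgrPdist_lt => e e0.
move/cvgrPdist_lt: Fy => /(_ (c * e) (mulr_gt0 c0 e0)).
apply: filterS => t /= h.
rewrite -(ltr_pM2l c0); apply: le_lt_trans (lo _ _) _.
by rewrite hx0.
Qed.

Section Qlem.
Variables (K : numFieldType) (Q : polyideal K) (m : nat).
Hypothesis BK : banach K^o.

Lemma emb0 (X Y : normedModType K) (x : X) : pi_emb (0 : pi_sp Q m X Y) x = 0.
Proof.
have := pi_emb_lin 1 (0 : pi_sp Q m X Y) 0 x; rewrite scale1r addr0 scale1r => h.
by apply: (addrI (pi_emb (0 : pi_sp Q m X Y) x)); rewrite -h addr0.
Qed.

Lemma embZ (X Y : normedModType K) a (p : pi_sp Q m X Y) x :
  pi_emb (a *: p) x = a *: pi_emb p x.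
Proof. by have := pi_emb_lin a p 0 x; rewrite !addr0 emb0 addr0. Qed.

Lemma embD (X Y : normedModType K) (p q : pi_sp Q m X Y) x :
  pi_emb (p + q) x = pi_emb p x + pi_emb q x.
Proof. by have := pi_emb_lin 1 p q x; rewrite !scale1r. Qed.

Lemma id_bounded : bounded_op (fun l : K^o => l).
Proof. by apply: (@lip_cont _ _ _ _ 1) => // x; rewrite mul1r. Qed.

Lemma p1_ex : exists p1 : pi_sp Q m K^o K^o,
  pi_emb p1 = (fun l : K^o => ((l : K) ^+ m : K^o)) /\ `|p1| = 1.
Proof.
have hb : forall q, q \in [:: ((fun l : K^o => l), (1 : K^o))] -> bounded_op q.1.
  by move=> q; rewrite inE => /eqP ->; apply: id_bounded.
have [p hp] := @pi_fintype _ Q m K^o K^o BK BK _ hb.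
have ep : pi_emb p = (fun l : K^o => ((l : K) ^+ m : K^o)).
  by rewrite hp; apply: funext => l; rewrite big_seq1 /= /GRing.scale /= mulr1.
by exists p; split => //; apply: pi_norm1.
Qed.

Lemma scal_norm (p : pi_sp Q m K^o K^o) (c : K) :
  pi_emb p = (fun l : K^o => ((l : K) ^+ m * c : K^o)) -> `|p| = `|c|.
Proof.
move=> hp; have [p1 [e1 n1]] := p1_ex.
have -> : p = c *: p1.
  apply: pi_emb_inj; apply: funext => l.
  by rewrite hp embZ e1 /GRing.scale /= mulrC.
by rewrite normrZ n1 mulr1.
Qed.

Lemma scal_bounded (X : normedModType K) (x : X) : bounded_op (fun l : K^o => l *: x).
Proof.
apply: (@lip_cont _ _ _ _ `|x|) => //.
- by move=> a u v; rewrite scalerDl scalerA.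
- by move=> l; rewrite normrZ mulrC.
Qed.

Lemma emb_bound (X Y : normedModType K) (hX : banach X) (hY : banach Y)
  (t : Y -> K^o) (P : pi_sp Q m X Y) x :
  bounded_op t -> sup_ball_norm t 1 -> `|t (pi_emb P x)| <= `|P| * `|x| ^+ m.
Proof.
move=> bt st.
have [p [ep hp]] := @pi_ideal _ Q m K^o X Y K^o BK hX hY BK t P
   (fun l : K^o => l *: x) bt (scal_bounded x).
have := hp 1 `|x| st (sup_scal x); rewrite mul1r.
suff -> : `|p| = `|t (pi_emb P x)| by [].
apply: scal_norm; rewrite ep; apply: funext => l /=.
rewrite (hpolyZ _ _ (pi_poly hX hY P)) linZ //; last by case: bt.
Qed.

End Qlem.

Section Main.
Variables (K : numFieldType) (Q : polyideal K) (m : nat).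
Hypothesis BK : banach K^o.
Hypothesis HB : forall (V : normedModType K) (y : V), exists phi : V -> K^o,
    lin phi /\ (forall z, `|phi z| <= `|z|) /\ phi y = `|y|.

Lemma HB' (V : normedModType K) (y : V) : y != 0 -> exists phi : V -> K^o,
  [/\ bounded_op phi, lin phi, (forall z, `|phi z| <= `|z|), phi y = `|y| &
      sup_ball_norm phi 1].
Proof.
move=> y0; have [phi [pl [pn py]]] := HB y.
exists phi; split => //; last exact: sup_phi pl pn py y0.
by apply: (@lip_cont _ _ _ _ 1) => // x; rewrite mul1r.
Qed.

Lemma emb_bound_vec (X Y : normedModType K) (hX : banach X) (hY : banach Y)
  (P : pi_sp Q m X Y) x : `|pi_emb P x| <= `|P| * `|x| ^+ m.
Proof.
have [->|n0] := eqVneq (pi_emb P x) 0.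
  by rewrite normr0 mulr_ge0 // exprn_ge0.
have [phi [bp pl pn py sp]] := HB' n0.
have := emb_bound BK hX hY P x bp sp.
by rewrite py normr_id.
Qed.

Lemma scal_le1 (a b : K) : 0 <= a -> b <= 1 -> 0 <= b -> a * b <= a.
Proof. by move=> a0 b1 b0; have := ler_wpM2l a0 b1; rewrite mulr1. Qed.

Lemma model_banach (X G : normedModType K) (hX : banach X) (phi : G -> X -> K^o) :
  strongly_finrank Q -> polyspace_model m phi -> banach G.
Proof.
move=> SF pm.
have [Km hKm] := SF m.
have hp g : hpoly m (phi g) by apply/(pm_onto pm); exists g.
have ex g : exists p : pi_sp Q m X K^o, pi_emb p = phi g /\ `|p| <= `|Km| * `|g|.
  have [p [ep bp]] := hKm X K^o hX BK (phi g) 1 (hp g).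
  exists p; split.
    by rewrite ep; apply: funext => x; rewrite /GRing.scale /= mulr1.
  have := bp _ (pm_norm pm g); rewrite normr1 mulr1 => h.
  by apply: le_normb.
pose Psi g := projT1 (cid (ex g)).
have PsiE g : pi_emb (Psi g) = phi g by rewrite /Psi; case: (cid (ex g)) => p [].
have PsiN g : `|Psi g| <= `|Km| * `|g| by rewrite /Psi; case: (cid (ex g)) => p [].
have phi0 x : phi 0 x = 0.
  have := pm_lin pm 1 0 0 x; rewrite scale1r addr0 scale1r => h.
  by apply: (addrI (phi 0 x)); rewrite -h addr0.
have PsiB g g' : Psi g - Psi g' = Psi (g - g').
  apply: pi_emb_inj; apply: funext => x.
  rewrite embD -scaleN1r embZ !PsiE.
  have e1 : phi (- g') x = - phi g' x.
    by have := pm_lin pm (-1) g' 0 x; rewrite addr0 phi0 addr0 !scaleN1r.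
  have e2 := pm_lin pm 1 g (- g') x; rewrite !scale1r e1 in e2.
  by rewrite e2 scaleN1r.
apply: (@banach_transfer _ _ _ Psi 1 (`|Km| + 1)).
- exact: pi_banach.
- exact: ltr01.
- by rewrite ltr_wpDl.
- move=> g g'; rewrite mul1r PsiB.
  apply: sup_le (pm_norm pm (g - g')) _ => x x1.
  rewrite -PsiE.
  have := @emb_bound _ Q m BK X K^o hX BK (fun l => l) (Psi (g - g')) x (id_bounded K) (sup_id1 K).
  move=> h; apply: le_trans h _; apply: scal_le1 => //.
    by apply: exprn_ile1.
- move=> g g'; rewrite PsiB; apply: le_trans (PsiN _) _.
  by apply: ler_wpM2r => //; rewrite lerDl.
- move=> p; have [g hg] := (pm_onto pm (pi_emb p)).1 (pi_poly hX BK p).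
  by exists g; apply: pi_emb_inj; rewrite PsiE.
Qed.

Lemma partA (E E1 F F1 : normedModType K)
  (hE : banach E) (hE1 : banach E1) (hF : banach F) (hF1 : banach F1)
  (Rop : E -> F) (B : E1 -> F1)
  (hR : bounded_op Rop) (hB : bounded_op B)
  (hB0 : exists x : E1, B x != 0)
  (A : opideal K)
  (S_RB : pi_sp Q m F1 E -> pi_sp Q m E1 F)
  (hS : forall P : pi_sp Q m F1 E, pi_emb (S_RB P) = Rop \o pi_emb P \o B)
  (hSA : oi_mem A S_RB) : oi_mem A Rop.
Proof.
have [x0 y10] := hB0; set y1 := B x0 in y10.
have [psi [bpsi lpsi npsi psiy spsi]] := HB' y10.
have hb (e : E) : forall q : (F1 -> K^o) * E, q \in [:: (psi, e)] -> bounded_op q.1.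
  by move=> q; rewrite inE => /eqP ->.
have exJ e : exists p : pi_sp Q m F1 E, pi_emb p = (fun y => psi y ^+ m *: e).
  have [p hp] := @pi_fintype _ Q m F1 E hF1 hE _ (hb e).
  by exists p; rewrite hp; apply: funext => y; rewrite big_seq1.
pose J e := projT1 (cid (exJ e)).
have JE e : pi_emb (J e) = (fun y => psi y ^+ m *: e) by rewrite /J; case: (cid _).
have Jlin : lin J.
  move=> a u v; apply: pi_emb_inj; apply: funext => y.
  rewrite pi_emb_lin !JE /= scalerDr !scalerA mulrC //.
have Jn e : `|J e| <= 1 * `|e|.
  have [p1 [e1 n1]] := p1_ex Q m BK.
  have [p [ep hp]] := @pi_ideal _ Q m F1 K^o K^o E hF1 BK BK hE
     (fun c : K^o => c *: e) p1 psi (scal_bounded e) bpsi.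
  have := hp _ _ (sup_scal e) spsi; rewrite n1 expr1n !mulr1 mul1r.
  suff -> : p = J e by [].
  by apply: pi_emb_inj; rewrite ep JE e1.
have bJ : bounded_op J by apply: (@lip_cont _ _ _ _ 1).
pose c : K := (`|y1| ^+ m)^-1.
have ny0 : `|y1| ^+ m != 0 by rewrite expf_neq0 // normr_eq0.
pose Ev (P : pi_sp Q m E1 F) := c *: pi_emb P x0.
have Evlin : lin Ev.
  by move=> a u v; rewrite /Ev pi_emb_lin scalerDr !scalerA mulrC.
have bEv : bounded_op Ev.
  apply: (@lip_cont _ _ _ _ (`|c| * `|x0| ^+ m)) => //.
  move=> P; rewrite /Ev normrZ -mulrA; apply: ler_wpM2l => //.
  by rewrite mulrC; apply: emb_bound_vec.
have := oi_ideal hE (pi_banach hF1 hE) (pi_banach hE1 hF) hF bJ hSA bEv.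
suff -> : Ev \o S_RB \o J = Rop by [].
apply: funext => e; rewrite /= /Ev hS /= JE /= psiy.
rewrite linZ; last by case: hR.
by rewrite scalerA mulVf // scale1r.
Qed.

Lemma partB (E E1 F F1 : normedModType K)
  (hE : banach E) (hE1 : banach E1) (hF : banach F) (hF1 : banach F1)
  (Rop : E -> F) (B : E1 -> F1)
  (hR : bounded_op Rop) (hB : bounded_op B)
  (hR0 : exists x : E, Rop x != 0)
  (A : opideal K)
  (S_RB : pi_sp Q m F1 E -> pi_sp Q m E1 F)
  (hS : forall P : pi_sp Q m F1 E, pi_emb (S_RB P) = Rop \o pi_emb P \o B)
  (hSA : oi_mem A S_RB) :
  strongly_finrank Q ->
   forall (G1 G2 : normedModType K)
          (phi1 : G1 -> F1 -> K^o) (phi2 : G2 -> E1 -> K^o),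
     polyspace_model m phi1 -> polyspace_model m phi2 ->
     forall Delta : G1 -> G2, (forall g : G1, phi2 (Delta g) = phi1 g \o B) ->
       oi_mem A Delta.
Proof.
move=> SF G1 G2 phi1 phi2 pm1 pm2 Delta hD.
have hG1 := model_banach hF1 SF pm1.
have hG2 := model_banach hE1 SF pm2.
have [Km hKm] := SF m.
have [e0 w0] := hR0; set w := Rop e0 in w0.
have [phi [bphi lphi nphi phiw sphi]] := HB' w0.
have hp1 g : hpoly m (phi1 g) by apply/(pm_onto pm1); exists g.
have ex g : exists p : pi_sp Q m F1 E, pi_emb p = (fun y => phi1 g y *: e0) /\ `|p| <= (Num.norm (Km * Num.norm e0)) * `|g|.
  have [p [ep bp]] := hKm F1 E hF1 hE (phi1 g) e0 (hp1 g).
  exists p; split => //.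
  have := bp _ (pm_norm pm1 g); rewrite mulrAC => h.
  by apply: le_normb.
pose J g := projT1 (cid (ex g)).
have JE g : pi_emb (J g) = (fun y => phi1 g y *: e0) by rewrite /J; case: (cid (ex g)) => p [].
have JN g : `|J g| <= (Num.norm (Km * Num.norm e0)) * `|g| by rewrite /J; case: (cid (ex g)) => p [].
have Jlin : lin J.
  move=> a u v; apply: pi_emb_inj; apply: funext => y.
  by rewrite pi_emb_lin !JE /= (pm_lin pm1) scalerDl scalerA.
have bJ : bounded_op J by apply: (@lip_cont _ _ _ _ (Num.norm (Km * Num.norm e0))).
have hpT : forall P : pi_sp Q m E1 F, hpoly m (phi \o pi_emb P).
  move=> P; have [A0 [mA [cA PA]]] := pi_poly hE1 hF P.
  exists (phi \o A0); split; [|split].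
  - move=> x i a u v /=; rewrite mA linD // linZ //.
  - move=> x; apply: continuous_comp; first exact: cA.
    by case: bphi => _; apply.
  - by move=> x /=; rewrite PA.
have exTT : forall P : pi_sp Q m E1 F, exists g2 : G2, phi2 g2 = phi \o pi_emb P.
  move=> P.
  have h := (pm_onto pm2 (phi \o pi_emb P)); have [g hg] := proj1 h (hpT P); by exists g; rewrite hg.
pose T P := projT1 (cid (exTT P)).
have TE P : phi2 (T P) = phi \o pi_emb P by rewrite /T; case: (cid (exTT P)).
have phi20 x : phi2 0 x = 0.
  have := pm_lin pm2 1 0 0 x; rewrite scale1r addr0 scale1r => h.
  by apply: (addrI (phi2 0 x)); rewrite -h addr0.
have phi2Z a g x : phi2 (a *: g) x = a *: phi2 g x.
  by have := pm_lin pm2 a g 0 x; rewrite !addr0 phi20 addr0.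
pose c : K := `|w|^-1.
pose U P := c *: T P.
have Ulin : lin U.
  move=> a u v; apply: (pm_inj pm2); apply: funext => x.
  rewrite (pm_lin pm2) /U !phi2Z !TE /= pi_emb_lin linD // linZ //.
  by rewrite scalerDr !scalerA mulrC.
have bU : bounded_op U.
  apply: (@lip_cont _ _ _ _ c); [by rewrite /c invr_ge0 | exact: Ulin | move=> P]; rewrite /U normrZ normfV normr_id.
  apply: ler_wpM2l => //.
  apply: sup_le (pm_norm pm2 (T P)) _ => x x1.
  rewrite TE /=; apply: le_trans (emb_bound BK hE1 hF P x bphi sphi) _.
  apply: scal_le1 => //; by apply: exprn_ile1.
have := oi_ideal hG1 (pi_banach hF1 hE) (pi_banach hE1 hF) hG2 bJ hSA bU.
suff -> : U \o S_RB \o J = Delta by [].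
apply: funext => g; apply: (pm_inj pm2); apply: funext => x.
rewrite /= /U phi2Z TE /= hS /= JE /= hD /=.
rewrite linZ; last by case: hR.
rewrite linZ // phiw /GRing.scale /= mulrCA /c mulVf ?mulr1 //.
by rewrite normr_eq0.
Qed.

End Main.

Local Close Scope classical_set_scope.
Unset Implicit Arguments.

Theorem mainTheorem15 (R : realType) (k : Kind)
  (E E1 F F1 : normedModType (scalars R k))
  (hE : banach E) (hE1 : banach E1) (hF : banach F) (hF1 : banach F1)
  (m : nat)
  (Rop : E -> F) (B : E1 -> F1)
  (hR : bounded_op Rop) (hB : bounded_op B)
  (hR0 : exists x : E, Rop x != 0) (hB0 : exists x : E1, B x != 0)
  (A : opideal (scalars R k)) (Q : polyideal (scalars R k))
  (S_RB : pi_sp Q m F1 E -> pi_sp Q m E1 F)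
  (hS : forall P : pi_sp Q m F1 E, pi_emb (S_RB P) = Rop \o pi_emb P \o B)
  (hSA : oi_mem A S_RB) :
  oi_mem A Rop /\
  (strongly_finrank Q ->
   forall (G1 G2 : normedModType (scalars R k))
          (phi1 : G1 -> F1 -> (scalars R k)^o) (phi2 : G2 -> E1 -> (scalars R k)^o),
     polyspace_model m phi1 -> polyspace_model m phi2 ->
     forall Delta : G1 -> G2, (forall g : G1, phi2 (Delta g) = phi1 g \o B) ->
       oi_mem A Delta).
Proof.
split.
- exact: (@partA _ Q m (@banachK R k) (@normed_hb R k) E E1 F F1 hE hE1 hF hF1
    Rop B hR hB hB0 A S_RB hS hSA).
- exact: (@partB _ Q m (@banachK R k) (@normed_hb R k) E E1 F F1 hE hE1 hF hF1
    Rop B hR hB hR0 A S_RB hS hSA).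
Qed.
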